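(* Let $\gamma$ be a basic $\ell$-cover of a matroid $\mathcal{M}$ on $[n]$, let $N_\gamma=\prod_i x_i^{\gamma(i)}$ and let $N_\gamma=N_1\cdots N_s$ be its standard form. Set $\gamma_i:=\gamma_{N_i}$ for $1\le i\le s$, $\gamma_{s+1}:=0$, and $\gamma_0:=\gamma_{x_{[n]}}$ (the constant function $1$). Then $$\mathcal{M}(\gamma)=\bigoplus_{i=0}^{s}\mathcal{M}(\gamma)|_{\operatorname{supp}\gamma_i-\operatorname{supp}\gamma_{i+1}}.$$ Hence $\mathcal{M}(\gamma)=\mathcal{M}(\gamma)^0\oplus\mathcal{M}(\gamma)^+$, where $\mathcal{M}(\gamma)^0:=\mathcal{M}(\gamma)|_{[n]-\operatorname{supp}\gamma}$ and $\mathcal{M}(\gamma)^+:=\mathcal{M}(\gamma)|_{\operatorname{supp}\gamma}=\bigoplus_{i=1}^s\mathcal{M}(\gamma)|_{\operatorname{supp}\gamma_i-\operatorname{supp}\gamma_{i+1}}$. In particular, every basis $F$ of $\mathcal{M}(\gamma)^+$ satisfies $F\subseteq\operatorname{supp}\gamma$ and $\gamma(F)=\ell$, and $\gamma(G)=0$ for every basis $G$ of $\mathcal{M}(\gamma)^0$.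
   Context: Matroids are identified with their independence complexes. For $\gamma:[n]\to\mathbb{N}_0$ and $S\subseteq[n]$, $\gamma(S)=\sum_{i\in S}\gamma(i)$, $\operatorname{supp}\gamma=\{i:\gamma(i)>0\}$. $\gamma$ is an $\ell$-cover of $\mathcal{M}$ if $\gamma(F)\ge\ell$ for every basis $F$, basic if minimal among $\ell$-covers in the pointwise order. $\mathcal{M}(\gamma)$ (the focal matroid) is the complex generated by the bases $F$ with $\gamma(F)=\ell$; it is a matroid. For a monomial $N=\prod x_i^{a_i}$, $\gamma_N(i)=a_i$; $x_{[n]}=x_1\cdots x_n$. The standard form of a monomial $N$ is the unique factorization $N=N_1\cdots N_s$ into squarefree monomials $N_i\neq1$ with $\operatorname{supp}N_1\supseteq\cdots\supseteq\operatorname{supp}N_s$. $\mathcal{M}|_A$ is the restriction to $A$ (independent sets of $\mathcal{M}$ contained in $A$), and $\oplus$ is the direct sum of matroids on disjoint ground sets. *)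

(* Defs.v *)
From mathcomp Require Import all_boot.
Set Implicit Arguments. Unset Strict Implicit. Unset Printing Implicit Defensive.

Section Matroids.
Variable n : nat.
Notation E := 'I_n.

(* A simplicial complex / matroid is identified with its family of independent sets. *)
Definition is_matroid (M : {set {set E}}) : Prop :=
  [/\ set0 \in M,
      (forall I J : {set E}, J \in M -> I \subset J -> I \in M) &
      (forall I J : {set E}, I \in M -> J \in M -> #|I| < #|J| ->
         exists2 x, x \in J :\: I & x |: I \in M)].

Definition is_basis (M : {set {set E}}) (F : {set E}) : Prop :=
  maxset (fun X => X \in M) F.

Definition gsum (g : E -> nat) (S : {set E}) : nat := \sum_(i in S) g i.

Definition gsupp (g : E -> nat) : {set E} := [set i | 0 < g i].

Definition is_cover (M : {set {set E}}) (l : nat) (g : E -> nat) : Prop :=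
  forall F, is_basis M F -> l <= gsum g F.

Definition is_basic_cover (M : {set {set E}}) (l : nat) (g : E -> nat) : Prop :=
  is_cover M l g /\
  forall g', is_cover M l g' -> (forall i, g' i <= g i) -> forall i, g' i = g i.

Definition focal (M : {set {set E}}) (l : nat) (g : E -> nat) : {set {set E}} :=
  [set I : {set E} | [exists F : {set E},
      [&& maxset (fun X => X \in M) F, gsum g F == l & I \subset F]]].

Definition restrict (M : {set {set E}}) (A : {set E}) : {set {set E}} :=
  [set I in M | I \subset A].

Definition dsum k (Ms : 'I_k -> {set {set E}}) : {set {set E}} :=
  [set I : {set E} | [exists f : {ffun 'I_k -> {set E}},
      [forall i, f i \in Ms i] && (I == \bigcup_i f i)]].

(* A squarefree monomial prod_{j in A} x_j is identified with its support A
   (it is /= 1 iff A is nonempty).  The sequence S = [:: supp N_1; ...; supp N_s]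
   is a standard form of the monomial N_gamma = prod x_i^{gamma i} iff the
   N_i are /= 1, supports decrease, and N_1 * ... * N_s = N_gamma. *)
Definition is_standard_form (g : E -> nat) (S : seq {set E}) : Prop :=
  [/\ forall i, i < size S -> nth set0 S i != set0,
      forall i, i.+1 < size S -> nth set0 S i.+1 \subset nth set0 S i &
      forall j, g j = count (fun A : {set E} => j \in A) S].

(* supp gamma_k, for gamma_0 = 1, gamma_k = gamma_{N_k} (1 <= k <= s),
   gamma_{s+1} = 0 *)
Definition supp_k (S : seq {set E}) (k : nat) : {set E} :=
  if k == 0 then setT else nth set0 S k.-1.

Definition piece (S : seq {set E}) (k : nat) : {set E} :=
  supp_k S k :\: supp_k S k.+1.

End Matroids.

(* Main.v *)
Require Import Defs.
From mathcomp Require Import all_boot zify.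
Set Implicit Arguments. Unset Strict Implicit. Unset Printing Implicit Defensive.

Section Mat.
Variable n : nat.
Local Notation E := 'I_n.
Variable M : {set {set E}}.
Hypothesis HM : is_matroid M.

Lemma indep_sub (I J : {set E}) : J \in M -> I \subset J -> I \in M.
Proof. by case: HM => _ H _; apply: H. Qed.

Lemma indep_aug (I J : {set E}) : I \in M -> J \in M -> #|I| < #|J| ->
  exists2 x, x \in J :\: I & x |: I \in M.
Proof. by case: HM => _ _ H; apply: H. Qed.

Lemma basis_max (F J : {set E}) : maxset (fun X => X \in M) F -> J \in M -> #|J| <= #|F|.
Proof.
move=> /maxsetP [FM Fmax] JM; rewrite leqNgt; apply/negP => lt.
have [x /setDP [_ xF] xM] := indep_aug FM JM lt.
have := Fmax _ xM (subsetUr _ _).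
move=> /setP /(_ x); rewrite !inE eqxx /= => H.
by rewrite -H in xF.
Qed.

Lemma indep_ext (I Y : {set E}) : I \in M -> Y \in M ->
  exists Z, [/\ Z \in M, I \subset Z, Z \subset I :|: Y & #|Y| <= #|Z|].
Proof.
move=> IM YM.
move Hk : (#|Y| - #|I|) => k.
elim: k I IM Hk => [|k IH] I IM Hk.
  exists I; split => //; first exact: subsetUl.
  lia.
have lt : #|I| < #|Y| by lia.
have [x /setDP [xY xI] xM] := indep_aug IM YM lt.
have [|Z [ZM sZ sZ2 cZ]] := IH _ xM.
  rewrite cardsU1 xI; lia.
exists Z; split => //.
- by apply: subset_trans sZ; apply: subsetUr.
- apply: (subset_trans sZ2); apply/subsetP => y; rewrite !inE.
  by case/orP => [/orP [/eqP ->| ->]| ->]; rewrite ?xY ?orbT.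
Qed.

Lemma basis_card (F Z : {set E}) : maxset (fun X => X \in M) F -> Z \in M -> #|F| <= #|Z| ->
  maxset (fun X => X \in M) Z.
Proof.
move=> bF ZM le; apply/maxsetP; split => // B BM sZB.
apply/eqP; rewrite eq_sym eqEcard sZB /=.
by apply: leq_trans le; apply: basis_max.
Qed.

Lemma basis_exists : exists F, maxset (fun X => X \in M) F.
Proof.
case: HM => H0 _ _.
by have [F bF _] := maxset_exists H0; exists F.
Qed.

End Mat.

Section W.
Variable n : nat.
Local Notation E := 'I_n.
Variable M : {set {set E}}.
Hypothesis HM : is_matroid M.
Variable g : E -> nat.
Variable l : nat.
Hypothesis Hcov : is_cover M l g.

Definition Bt t : {set E} := [set x | g x < t].
Definition Bmin (F : {set E}) := maxset (fun X => X \in M) F && (gsum g F == l).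

Lemma gsum_sub (A B : {set E}) : A \subset B -> gsum g A <= gsum g B.
Proof.
move=> sAB; rewrite /gsum [X in _ <= X](big_setID A) /=.
by rewrite (setIidPr sAB) leq_addr.
Qed.

Lemma gsumU1 (x : E) (A : {set E}) : x \notin A -> gsum g (x |: A) = g x + gsum g A.
Proof. by move=> xA; rewrite /gsum big_setU1. Qed.

Lemma L1 (F J : {set E}) t : Bmin F -> J \in M -> J \subset Bt t ->
  #|J| <= #|F :&: Bt t|.
Proof.
move=> /andP [bF /eqP gF] JM sJ.
rewrite leqNgt; apply/negP => lt.
have bF' := bF; move/maxsetP: bF' => [FM _].
have FtM : F :&: Bt t \in M by exact: (indep_sub HM FM (subsetIl _ _)).
have [x /setDP [xJ xFt] xM] := indep_aug HM FtM JM lt.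
have xt : g x < t by move/subsetP: sJ => /(_ x xJ); rewrite inE.
have xF : x \notin F by apply: contra xFt => xF; rewrite inE xF inE.
have [Z [ZM sZ sZ2 cZ]] := indep_ext HM xM FM.
have cZ' : #|Z| <= #|F| by exact: (basis_max HM bF ZM).
have bZ : maxset (fun X => X \in M) Z by exact: (basis_card HM bF ZM cZ).
have sZF : Z \subset x |: F.
  apply: (subset_trans sZ2); apply/subsetP => y; rewrite !inE.
  by case/orP => [/orP [-> | /andP [-> _]]| ->]; rewrite ?orbT.
have xZ : x \in Z by move/subsetP: sZ; apply; rewrite !inE eqxx.
have nFZ : ~~ (F \subset Z).
  apply/negP => FZ.
  have : x |: F \subset Z by rewrite subUset sub1set xZ FZ.
  move/subset_leq_card; rewrite cardsU1 xF add1n => h.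
  by have := leq_trans h cZ'; rewrite ltnn.
have [y yF yZ] := subsetPn nFZ.
have yt : t <= g y.
  rewrite leqNgt; apply/negP => yt; move: yZ; move/subsetP: sZ => /(_ y).
  by rewrite !inE yF yt orbT => ->.
have : gsum g (y |: Z) <= gsum g (x |: F).
  apply: gsum_sub; rewrite subUset sZF sub1set !inE yF orbT //.
rewrite gsumU1 // gsumU1 // gF.
move=> h; have h2 := Hcov bZ; clear -h h2 xt yt; lia.
Qed.

Lemma Lcnt (F1 F2 : {set E}) t : Bmin F1 -> Bmin F2 ->
  #|F1 :&: Bt t| = #|F2 :&: Bt t|.
Proof.
move=> b1 b2.
have i1 : F1 :&: Bt t \in M.
  by move: b1 => /andP [/maxsetP [F1M _] _]; exact: (indep_sub HM F1M (subsetIl _ _)).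
have i2 : F2 :&: Bt t \in M.
  by move: b2 => /andP [/maxsetP [F2M _] _]; exact: (indep_sub HM F2M (subsetIl _ _)).
apply/eqP; rewrite eqn_leq; apply/andP; split; apply: L1 => //; exact: subsetIr.
Qed.

End W.

Lemma sum_ord_lt N m : \sum_(t < N) (t < m) = minn m N.
Proof.
elim: N => [|N IH]; first by rewrite big_ord0 minn0.
rewrite big_ord_recr /= IH; clear IH; lia.
Qed.

Section L.
Variable n : nat.
Local Notation E := 'I_n.
Variable g : E -> nat.

Lemma layer N (F : {set E}) : (forall x, g x < N) ->
  gsum g F = \sum_(t < N) #|F :\: Bt g t.+1|.
Proof.
move=> HN; rewrite /gsum.
transitivity (\sum_(x in F) \sum_(t < N) (t < g x)).
  apply: eq_bigr => x _; rewrite sum_ord_lt; have := HN x; clear; lia.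
rewrite exchange_big /=; apply: eq_bigr => t _.
rewrite -sum1_card big_mkcond /= [RHS]big_mkcond /=.
apply: eq_bigr => x _; rewrite !inE ltnS -ltnNge.
by case: (x \in F); case: (t < g x).
Qed.
End L.

Section G.
Variable n : nat.
Local Notation E := 'I_n.
Variable M : {set {set E}}.
Hypothesis HM : is_matroid M.
Variable g : E -> nat.
Variable l : nat.
Hypothesis Hcov : is_cover M l g.
Variable N : nat.
Hypothesis HN : forall x, g x < N.

Lemma Bt_mono u t : u <= t -> Bt g u \subset Bt g t.
Proof. by move=> ut; apply/subsetP => x; rewrite !inE => h; apply: leq_trans h ut. Qed.

Lemma Bt0 : Bt g 0 = set0.
Proof. by apply/setP => x; rewrite !inE ltn0. Qed.

Lemma BtN : Bt g N = setT.
Proof. by apply/setP => x; rewrite !inE HN. Qed.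

Lemma Gstep (F0 I : {set E}) : Bmin M g l F0 ->
  (forall t, exists F, Bmin M g l F /\ I :&: [set x | g x == t] \subset F) ->
  forall t, exists X, [/\ X \in M, X \subset Bt g t, I :&: Bt g t \subset X &
     forall u, u <= t -> #|X :&: Bt g u| = #|F0 :&: Bt g u|].
Proof.
move=> b0 HI; elim => [|t [X [XM XB IX HX]]].
  exists set0; split.
  - by case: HM.
  - exact: sub0set.
  - by rewrite Bt0 setI0.
  - by move=> u; rewrite leqn0 => /eqP ->; rewrite Bt0 !setI0.
have [Ft [bt It]] := HI t.
have btM : Ft \in M by case/andP: bt => /maxsetP [].
set Y := Ft :&: Bt g t.+1.
have YM : Y \in M by exact: (indep_sub HM btM (subsetIl _ _)).
have [Z [ZM sZ sZ2 cZ]] := indep_ext HM XM YM.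
have Bst : Bt g t \subset Bt g t.+1 by apply: Bt_mono.
have ZB : Z \subset Bt g t.+1.
  apply: (subset_trans sZ2); rewrite subUset (subset_trans XB Bst) /=.
  exact: subsetIr.
have cY : #|Y| = #|F0 :&: Bt g t.+1| by apply: (Lcnt HM Hcov).
have cZ1 : #|Z| <= #|F0 :&: Bt g t.+1| by apply: (L1 HM Hcov).
have cZ2 : #|Z| = #|F0 :&: Bt g t.+1| by apply/eqP; rewrite eqn_leq cZ1 -cY.
have cX : #|X| = #|F0 :&: Bt g t| by rewrite -(HX t (leqnn t)) (setIidPl XB).
have ZX : Z :&: Bt g t = X.
  apply/eqP; rewrite eq_sym eqEcard subsetI sZ XB /= cX.
  apply: (L1 HM Hcov) => //; last exact: subsetIr.
  exact: (indep_sub HM ZM (subsetIl _ _)).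
have W12 : Y :\: Bt g t \subset Z :\: Bt g t.
  have W21 : Z :\: Bt g t \subset Y :\: Bt g t.
    apply/subsetP => x; rewrite inE => /andP [xB xZ].
    rewrite inE xB /=.
    move/subsetP: sZ2 => /(_ x xZ); rewrite inE => /orP [xX|//].
    by move/subsetP: XB => /(_ x xX) xB'; rewrite xB' in xB.
  suff /eqP -> : Z :\: Bt g t == Y :\: Bt g t by [].
  rewrite eqEcard W21 /= !cardsD ZX cZ2 -cY.
  have : #|X| <= #|Y :&: Bt g t|.
    rewrite cX (Lcnt HM Hcov _ b0 bt); apply: subset_leq_card.
    by apply/subsetP => x; rewrite /Y !inE => /andP [-> h]; rewrite h ltnS ltnW.
  clear; lia.
exists Z; split => //.
- apply/subsetP => x; rewrite inE => /andP [xI]; rewrite inE ltnS leq_eqVlt.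
  case/orP => [/eqP gx | gx].
  + have xFt : x \in Ft by move/subsetP: It; apply; rewrite !inE xI gx eqxx.
    have : x \in Y :\: Bt g t by rewrite !inE xFt gx ltnSn ltnn.
    by move/(subsetP W12); rewrite inE => /andP [].
  + by apply: (subsetP sZ); apply: (subsetP IX); rewrite !inE xI gx.
- move=> u; rewrite leq_eqVlt => /orP [/eqP -> | ].
    by rewrite (setIidPl ZB).
  rewrite ltnS => ut.
  have -> : Z :&: Bt g u = X :&: Bt g u by rewrite -ZX -setIA (setIidPr (Bt_mono ut)).
  exact: HX.
Qed.

Lemma Glem (F0 I : {set E}) : Bmin M g l F0 ->
  (forall t, exists F, Bmin M g l F /\ I :&: [set x | g x == t] \subset F) ->
  exists F, Bmin M g l F /\ I \subset F.
Proof.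
move=> b0 HI.
have [X [XM XB IX HX]] := Gstep b0 HI N.
rewrite BtN setIT in IX.
have cX : #|X| = #|F0| by have := HX N (leqnn N); rewrite BtN !setIT.
have bF0 : maxset (fun X => X \in M) F0 by case/andP: b0.
have bX : maxset (fun X => X \in M) X by apply: (basis_card HM bF0) => //; rewrite cX.
exists X; split => //; apply/andP; split => //.
case/andP: b0 => _ /eqP <-.
rewrite (layer F0 HN) (layer X HN); apply/eqP; apply: eq_bigr => t _.
by rewrite !cardsD cX HX.
Qed.

Hypothesis Hbas : is_basic_cover M l g.

Lemma exists_Bmin : exists F, Bmin M g l F.
Proof.
case: (boolP [exists F, Bmin M g l F]) => [/existsP // | /existsPn nB].
case: Hbas => Hc Hmin.
case: (boolP [exists i, 0 < g i]) => [/existsP [i gi] | /existsPn g0].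
  pose g' := fun j => if j == i then (g i).-1 else g j.
  have cov' : is_cover M l g'.
    move=> F bF.
    have h1 := Hc F bF.
    have h2 : gsum g F != l by have := nB F; rewrite /Bmin bF.
    have h3 : gsum g F <= gsum g' F + 1.
      rewrite /gsum; case: (boolP (i \in F)) => iF.
        rewrite (bigD1 i) //= [X in _ <= X + _](bigD1 i) //=.
        rewrite [X in _ <= _ + X + _](eq_bigr g); last by move=> j /andP [_ ji]; rewrite /g' (negbTE ji).
        rewrite /g' eqxx.
        clear; lia.
      rewrite [X in _ <= X + _](eq_bigr g) ?leq_addr // => j jF; rewrite /g'.
      by case: eqP => // ji; move: iF; rewrite -ji jF.
    clear -h1 h2 h3; lia.
  have := Hmin g' cov'.
  have le : forall j, g' j <= g j by move=> j; rewrite /g'; case: eqP => // ->; apply: leq_pred.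
  move=> /(_ le i); rewrite /g' eqxx; clear -gi; lia.
have [F bF] := basis_exists HM.
have gF : gsum g F = 0.
  by rewrite /gsum big1 // => j _; have := g0 j; rewrite lt0n negbK => /eqP.
have := nB F; rewrite /Bmin bF gF /=.
have := Hc F bF; rewrite gF leqn0 => /eqP ->; by rewrite eqxx.
Qed.

End G.

Section D.
Variable n : nat.
Local Notation E := 'I_n.
Variable M : {set {set E}}.
Hypothesis HM : is_matroid M.
Variable g : E -> nat.
Variable l : nat.
Hypothesis Hbas : is_basic_cover M l g.
Variable N : nat.
Hypothesis HN : forall x, g x < N.

Local Notation Mg := (focal M l g).

Lemma inMg (I : {set E}) : (I \in Mg) = [exists F, Bmin M g l F && (I \subset F)].
Proof.
by rewrite /focal inE /Bmin; apply: eq_existsb => F; rewrite andbA.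
Qed.

Lemma Mg_sub (I J : {set E}) : J \in Mg -> I \subset J -> I \in Mg.
Proof.
rewrite !inMg => /existsP [F /andP [bF JF]] IJ; apply/existsP; exists F.
by rewrite bF (subset_trans IJ JF).
Qed.

Lemma Dlem k (A : 'I_k -> {set E}) (U : {set E}) :
  \bigcup_i A i = U ->
  (forall i j x y, x \in A i -> y \in A j -> g x = g y -> i = j) ->
  restrict Mg U = dsum (fun i => restrict Mg (A i)).
Proof.
move=> HU Hst; have Hcov : is_cover M l g by case: Hbas.
apply/setP => I; rewrite /restrict /dsum [in LHS]inE [in RHS]inE.
apply/idP/idP.
  move=> /andP [IM IU]; apply/existsP; exists [ffun i => I :&: A i].
  apply/andP; split.
    apply/forallP => i; rewrite ffunE inE subsetIr andbT.
    exact: (Mg_sub IM (subsetIl _ _)).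
  apply/eqP/setP => x; apply/idP/idP => [xI|/bigcupP [i _]].
    have : x \in U by move/subsetP: IU; apply.
    rewrite -HU => /bigcupP [i _ xA]; apply/bigcupP; exists i => //.
    by rewrite ffunE inE xI.
  by rewrite ffunE inE => /andP [].
case/existsP => f /andP [/forallP Hf /eqP ->].
have HfM i : f i \in Mg by have := Hf i; rewrite inE => /andP [].
have HfA i : f i \subset A i by have := Hf i; rewrite inE => /andP [].
apply/andP; split; last first.
  apply/bigcupsP => i _; rewrite -HU; apply: (subset_trans (HfA i)).
  exact: (bigcup_sup i).
have [F0 b0] := exists_Bmin HM Hbas.
set J := \bigcup_i f i.
have HI : forall t, exists F, Bmin M g l F /\ J :&: [set x | g x == t] \subset F.
  move=> t; case: (set_0Vmem (J :&: [set x | g x == t])) => [-> | [x]].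
    by exists F0; rewrite sub0set.
  rewrite !inE => /andP [/bigcupP [i _ xf] /eqP gx].
  have := HfM i; rewrite inMg => /existsP [F /andP [bF fF]].
  exists F; split => //; apply/subsetP => y; rewrite !inE => /andP [/bigcupP [j _ yf] /eqP gy].
  have ij : i = j.
    apply: (Hst i j x y); [exact: (subsetP (HfA i)) | exact: (subsetP (HfA j)) | by rewrite gx gy].
  by move: yf; rewrite -ij => yf; apply: (subsetP fF).
have [F [bF IF]] := Glem HM Hcov HN b0 HI.
by rewrite inMg; apply/existsP; exists F; rewrite bF IF.
Qed.

End D.

Section SF.
Variable n : nat.
Local Notation E := 'I_n.

Lemma sf_mem (S : seq {set E}) (j : E) :
  (forall i, i.+1 < size S -> nth set0 S i.+1 \subset nth set0 S i) ->
  forall i, (j \in nth set0 S i) = (i < count (fun A : {set E} => j \in A) S).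
Proof.
elim: S => [|A S IH] Hc i; first by rewrite nth_nil inE.
have Hc' : forall i, i.+1 < size S -> nth set0 S i.+1 \subset nth set0 S i.
  by move=> i' h; apply: (Hc i'.+1).
have cnt0 : j \notin A -> count (fun A : {set E} => j \in A) S = 0.
  move=> jA; apply/eqP; rewrite -leqn0 leqNgt; apply/negP => c.
  have := IH Hc' 0; rewrite c => j0.
  have sz : 0 < size S by apply: leq_trans c (count_size _ _).
  have := Hc 0 sz; move/subsetP => /(_ j j0) /= jA'.
  by rewrite jA' in jA.
case: i => [|i] /=.
  case: (boolP (j \in A)) => jA //=; by rewrite cnt0.
rewrite IH //; case: (boolP (j \in A)) => jA /=.
  by rewrite add1n ltnS.
by rewrite cnt0.
Qed.

Lemma piece_level (g : E -> nat) (S : seq {set E}) : is_standard_form g S ->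
  forall k, piece S k = [set x | g x == k].
Proof.
case=> _ Hc Hg.
have supp : forall k, supp_k S k = [set x | k <= g x].
  move=> k; apply/setP => x; rewrite /supp_k inE; case: k => [|k] //=.
    by rewrite inE.
  by rewrite sf_mem // -Hg.
move=> k; apply/setP => x; rewrite /piece !supp !inE eqn_leq.
by rewrite -ltnNge ltnS andbC.
Qed.

Lemma g_bound (g : E -> nat) (S : seq {set E}) : is_standard_form g S ->
  forall x, g x < (size S).+1.
Proof. by case=> _ _ Hg x; rewrite ltnS Hg count_size. Qed.

End SF.

Lemma eq_dsum n k (Ms Ms' : 'I_k -> {set {set 'I_n}}) :
  (forall i, Ms i = Ms' i) -> dsum Ms = dsum Ms'.
Proof.
move=> H; apply/setP => I; rewrite !inE; apply: eq_existsb => f.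
by congr andb; apply: eq_forallb => i; rewrite H.
Qed.

Lemma inR n (Mg : {set {set 'I_n}}) U I : (I \in restrict Mg U) = (I \in Mg) && (I \subset U).
Proof. by rewrite /restrict !inE. Qed.

Lemma restrictT n (Mg : {set {set 'I_n}}) : restrict Mg setT = Mg.
Proof. by apply/setP => I; rewrite inR subsetT andbT. Qed.

Unset Implicit Arguments. Set Strict Implicit.
Theorem theorem3p7 (n : nat) (M : {set {set 'I_n}}) (l : nat) (g : 'I_n -> nat)
    (S : seq {set 'I_n}) :
  is_matroid M -> is_basic_cover M l g -> is_standard_form g S ->
  let Mg := focal M l g in
  let s := size S in
  let M0 := restrict Mg (~: gsupp g) in
  let Mp := restrict Mg (gsupp g) in
  [/\ (* the pieces are pairwise disjoint and cover [n] *)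
      (forall i j : 'I_s.+1, i != j -> [disjoint piece S i & piece S j]),
      \bigcup_(i < s.+1) piece S i = setT &
      (* M(gamma) = (+)_{i=0}^{s} M(gamma)|_{supp gamma_i - supp gamma_{i+1}} *)
      Mg = dsum (fun i : 'I_s.+1 => restrict Mg (piece S i))] /\
  [/\
      (* M(gamma) = M(gamma)^0 (+) M(gamma)^+ *)
      Mg = dsum (fun i : 'I_2 => if i == ord0 then M0 else Mp),
      (* M(gamma)^+ = (+)_{i=1}^{s} M(gamma)|_{supp gamma_i - supp gamma_{i+1}} *)
      Mp = dsum (fun i : 'I_s => restrict Mg (piece S i.+1)),
      (forall F, is_basis Mp F -> F \subset gsupp g /\ gsum g F = l) &
      (forall G, is_basis M0 G -> gsum g G = 0)].
Proof.
move=> HM Hbas Hsf Mg s M0 Mp.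
have HN := g_bound Hsf.
have Hpl := piece_level Hsf.
have Hcov : is_cover M l g by case: Hbas.
split; split.
- move=> i j ij; rewrite -setI_eq0 !Hpl; apply/eqP/setP => x; rewrite !inE.
  apply/negbTE/negP => /andP [/eqP h1 /eqP h2]; move/eqP: ij; apply.
  by apply/val_inj; rewrite /= -h1 -h2.
- apply/setP => x; rewrite inE; apply/bigcupP; exists (Ordinal (HN x)) => //.
  by rewrite Hpl inE.
- rewrite -[LHS]restrictT; apply: (Dlem HM Hbas HN).
    apply/setP => x; rewrite inE; apply/bigcupP; exists (Ordinal (HN x)) => //.
    by rewrite Hpl inE.
  move=> i j x y; rewrite !Hpl !inE => /eqP h1 /eqP h2 e.
  by apply: val_inj; rewrite /= -h1 -h2 e.
- rewrite (@eq_dsum _ _ _ (fun i : 'I_2 => restrict Mg (if i == ord0 then ~: gsupp g else gsupp g))); last first.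
    by move=> i; case: (i == ord0).
  rewrite -[LHS]restrictT; apply: (Dlem HM Hbas HN).
    apply/setP => x; rewrite inE; apply/bigcupP.
    case: (boolP (0 < g x)) => gx.
      by exists ord_max => //=; rewrite inE.
    by exists ord0 => //=; rewrite !inE.
  move=> i j x y; move: i j => [[|[|//]] pi] [[|[|//]] pj] /=;
    rewrite ?inE => hx hy e //; try by apply: val_inj.
  + by rewrite e in hx; rewrite hy in hx.
  + by rewrite e in hx; rewrite hx in hy.
- apply: (Dlem HM Hbas HN).
    apply/setP => x; rewrite inE; apply/bigcupP/idP => [[i _]|gx].
      by rewrite Hpl inE => /eqP ->.
    have lt : g x - 1 < s by have := HN x; clear -gx; lia.
    exists (Ordinal lt) => //; rewrite Hpl inE /=; apply/eqP; clear -gx; lia.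
  move=> i j x y; rewrite !Hpl !inE => /eqP h1 /eqP h2 e.
  by apply: val_inj; apply/eqP; rewrite -eqSS -h1 -h2 e.
- move=> F /maxsetP [FM Fmax].
  have FM' := FM; rewrite inR in FM'; case/andP: FM' => FMg Fs.
  split => //.
  move: FMg; rewrite inMg => /existsP [B /andP [bB BF]].
  have BMg : B \in Mg by rewrite inMg; apply/existsP; exists B; rewrite bB subxx.
  have BsM : B :&: gsupp g \in Mp.
    by rewrite inR subsetIr andbT; apply: (Mg_sub BMg (subsetIl _ _)).
  have := Fmax _ BsM; rewrite subsetI BF Fs => /(_ isT) <-.
  case/andP: bB => _ /eqP <-.
  rewrite /gsum [X in _ = X](big_setID (gsupp g)) /= [X in _ = _ + X]big1 ?addn0 //.
  by move=> x; rewrite !inE => /andP [h _]; move: h; rewrite lt0n negbK => /eqP.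
- move=> G /maxsetP [GM _]; rewrite inR in GM; case/andP: GM => _ Gs.
  rewrite /gsum big1 // => x xG; have := subsetP Gs x xG.
  by rewrite !inE lt0n negbK => /eqP.
Qed.
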